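(* Let $S$ be a finite alphabet and $X \subset S^{\mathbb{Z}}$ a subshift. For all words $u, v \in S^*$, if $C_X(u) = C_X(v)$, then $C_{X^{(1)}}(u) = C_{X^{(1)}}(v)$.
   Context: A subshift $X \subset S^{\mathbb{Z}}$ is a closed, shift-invariant subset of $S^{\mathbb{Z}}$ (product topology, $S$ discrete). A word $w$ occurs in $X$, written $w \sqsubset X$, if it appears as a contiguous subword of some configuration of $X$. The context of a word $v \in S^*$ in $X$ is $C_X(v) = \{(w,w') \in (S^* )^2 \mid wvw' \sqsubset X\}$. The Cantor–Bendixson derivative $X^{(1)} = X'$ is the set of non-isolated points of $X$, i.e. $X' = \{x \in X \mid x \in \overline{X \setminus \{x\}}\}$; it is again a subshift. *)

(* Defs.v *)
From mathcomp Require Import all_boot.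
From Stdlib Require Import ZArith.
Set Implicit Arguments. Unset Strict Implicit. Unset Printing Implicit Defensive.

Definition config (S : Type) := Z -> S.
Definition cset (S : Type) := config S -> Prop.

Definition shift (S : Type) (x : config S) : config S := fun i => x (Z.add i 1).
Definition shift_inv (S : Type) (x : config S) : config S := fun i => x (Z.sub i 1).

(* x and y agree on the window [-n, n]: basic neighbourhoods of the product topology. *)
Definition agree_on (S : Type) (n : nat) (x y : config S) : Prop :=
  forall i : Z, Z.le (Z.opp (Z.of_nat n)) i -> Z.le i (Z.of_nat n) -> x i = y i.

(* Closedness in the product topology: X contains all its limit points. *)
Definition closed_set (S : Type) (X : cset S) : Prop :=
  forall x : config S, (forall n : nat, exists y, X y /\ agree_on n x y) -> X x.

Definition shift_invariant (S : Type) (X : cset S) : Prop :=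
  forall x : config S, X x -> X (shift x) /\ X (shift_inv x).

Definition subshift (S : Type) (X : cset S) : Prop :=
  closed_set X /\ shift_invariant X.

Definition subword (S : Type) (x : config S) (i : Z) (m : nat) : seq S :=
  map (fun k => x (Z.add i (Z.of_nat k))) (iota 0 m).

Definition occurs (S : Type) (w : seq S) (X : cset S) : Prop :=
  exists x, X x /\ exists i : Z, subword x i (size w) = w.

Definition context (S : Type) (X : cset S) (v : seq S) : seq S * seq S -> Prop :=
  fun p => occurs (p.1 ++ v ++ p.2) X.

Definition CB_deriv (S : Type) (X : cset S) : cset S :=
  fun x => X x /\ forall n : nat, exists y, X y /\ y <> x /\ agree_on n x y.

(* Main.v *)
Require Import Defs.
From mathcomp Require Import all_boot.
From Stdlib Require Import ZArith.
From mathcomp Require Import zify.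
From Stdlib Require Import Lia FunctionalExtensionality PropExtensionality Classical.
Set Implicit Arguments. Unset Strict Implicit.
Local Open Scope Z_scope.
Lemma size_subword (S : Type) (x : config S) i m : size (subword x i m) = m.
Proof. by rewrite /subword size_map size_iota. Qed.

Lemma nth_subword (S : Type) (x : config S) i m d k : Nat.lt k m ->
  nth d (subword x i m) k = x (i + Z.of_nat k).
Proof. move=> /ltP Hk. by rewrite /subword (nth_map 0%nat d) ?size_iota // nth_iota. Qed.

Lemma subword_eq (S : Type) (x : config S) i m (w : seq S) d : size w = m ->
  (forall k, Nat.lt k m -> x (i + Z.of_nat k) = nth d w k) -> subword x i m = w.
Proof.
move=> Hs H. apply: (@eq_from_nth _ d); first by rewrite size_subword.
move=> k; rewrite size_subword => /ltP Hk. by rewrite nth_subword // H.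
Qed.

Lemma shiftZ (S : Type) (X : cset S) : shift_invariant X ->
  forall k x, X x -> X (fun i => x (i + k)).
Proof.
move=> HS.
have Hp : forall n x, X x -> X (fun i => x (i + Z.of_nat n)).
  move=> n x Xx; elim: n => [|n IH].
    have -> : (fun i => x (i + Z.of_nat O)) = x by apply: functional_extensionality => i; congr (x _); lia.
    done.
  have -> : (fun i => x (i + Z.of_nat (Nat.succ n))) = Defs.shift (fun i => x (i + Z.of_nat n)).
    apply: functional_extensionality => i; rewrite /Defs.shift; congr (x _); rewrite Nat2Z.inj_succ; lia.
  exact: (HS _ IH).1.
have Hn : forall n x, X x -> X (fun i => x (i - Z.of_nat n)).
  move=> n x Xx; elim: n => [|n IH].
    have -> : (fun i => x (i - Z.of_nat O)) = x by apply: functional_extensionality => i; congr (x _); lia.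
    done.
  have -> : (fun i => x (i - Z.of_nat (Nat.succ n))) = shift_inv (fun i => x (i - Z.of_nat n)).
    apply: functional_extensionality => i; rewrite /shift_inv; congr (x _); rewrite Nat2Z.inj_succ; lia.
  exact: (HS _ IH).2.
move=> k x Xx. case: (Z.le_gt_cases 0 k) => Hk.
  have -> : k = Z.of_nat (Z.to_nat k) by lia. exact: Hp.
have -> : (fun i => x (i + k)) = (fun i => x (i - Z.of_nat (Z.to_nat (- k)))).
  apply: functional_extensionality => i; congr (x _); lia.
exact: Hn.
Qed.
Definition splice (S : Type) (x : config S) (j : Z) (lu : nat) (v : seq S) : config S :=
  fun k => if k <? j then x k else if k <? j + Z.of_nat (size v)
    then nth (x k) v (Z.to_nat (k - j)) else x (k - Z.of_nat (size v) + Z.of_nat lu).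

Lemma splice_in (S : Type) (X : cset S) (HX : subshift X) (u v : seq S)
  (H : context X u = context X v) x j :
  X x -> subword x j (size u) = u -> X (splice x j (size u) v).
Proof.
move=> Xx Hu. apply: HX.1 => n.
pose M := (n + size u + size v + Z.abs_nat j + 1)%nat.
pose p := subword x (j - Z.of_nat M) M.
pose s := subword x (j + Z.of_nat (size u)) M.
have Hocc : occurs (p ++ u ++ s) X.
  exists x; split => //; exists (j - Z.of_nat M).
  apply: (@subword_eq _ _ _ _ _ (x j)) => // k Hk.
  rewrite !size_cat /p /s !size_subword in Hk.
  rewrite nth_cat size_subword.
  case: ltnP => H1.
    rewrite nth_subword; last by apply/ltP.
    done.
  rewrite nth_cat.
  case: ltnP => H2.
    rewrite -Hu nth_subword; last by apply/ltP; lia.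
    congr (x _); lia.
  rewrite nth_subword; last by apply/ltP; lia.
  congr (x _); lia.
have : context X v (p, s) by rewrite -H.
case=> z [Xz [i0 Hz]].
exists (fun t => z (t + (i0 - (j - Z.of_nat M)))); split.
  exact: shiftZ HX.2 _ _ Xz.
move=> i H1 H2.
have Hzk : forall k, Nat.lt k (M + size v + M) -> z (i0 + Z.of_nat k) = nth (x j) (p ++ v ++ s) k.
  move=> k Hk; rewrite -Hz nth_subword //. rewrite !size_cat /p /s !size_subword. lia.
have -> : i + (i0 - (j - Z.of_nat M)) = i0 + Z.of_nat (Z.to_nat (i - (j - Z.of_nat M))) by lia.
rewrite Hzk; last by lia.
rewrite /splice nth_cat /p size_subword.
case: (Z.ltb_spec i j) => Hij.
  case: ltnP => H3; last by lia.
  rewrite nth_subword; last by apply/ltP.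
  congr (x _); lia.
case: ltnP => H3; first by lia.
rewrite nth_cat.
case: (Z.ltb_spec i (j + Z.of_nat (size v))) => Hij2.
  case: ltnP => H4; last by lia.
  rewrite (set_nth_default (x j)); last by apply/ltP; lia.
  congr nth; lia.
case: ltnP => H4; first by lia.
rewrite /s nth_subword; last by apply/ltP; lia.
congr (x _); lia.
Qed.
Lemma splice_deriv (S : Type) (X : cset S) (HX : subshift X) (u v : seq S)
  (H : context X u = context X v) x j :
  CB_deriv X x -> subword x j (size u) = u -> CB_deriv X (splice x j (size u) v).
Proof.
move=> [Xx Hd] Hu. split; first exact: splice_in.
move=> n. pose N := (n + size u + size v + Z.abs_nat j + 1)%nat.
case: (Hd N) => x' [Xx' [Hne Hag]].
have Hu' : subword x' j (size u) = u.
  rewrite -{2}Hu. apply: (@subword_eq _ _ _ _ _ (x j)); first by rewrite size_subword.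
  move=> k Hk; rewrite nth_subword //; symmetry; apply: Hag; lia.
exists (splice x' j (size u) v). split; first exact: splice_in.
split.
  move=> E. apply: Hne. apply: functional_extensionality => i. apply: NNPP => Hi.
  have key : forall t, splice x' j (size u) v t = splice x j (size u) v t by rewrite E.
  case: (Z.ltb_spec i j) => Hij.
    have := key i; rewrite /splice (proj2 (Z.ltb_lt _ _) Hij) => E2; exact: Hi E2.
  case: (Z.ltb_spec i (j + Z.of_nat (size u))) => Hij2.
    apply: Hi; symmetry; apply: Hag; lia.
  have := key (i - Z.of_nat (size u) + Z.of_nat (size v)); rewrite /splice.
  rewrite (proj2 (Z.ltb_ge _ _)); last by lia.
  rewrite (proj2 (Z.ltb_ge _ _)); last by lia.
  have -> : i - Z.of_nat (size u) + Z.of_nat (size v) - Z.of_nat (size v) + Z.of_nat (size u) = i by lia.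
  exact: Hi.
move=> i H1 H2. rewrite /splice.
case: (Z.ltb_spec i j) => Hij; first by apply: Hag; lia.
case: (Z.ltb_spec i (j + Z.of_nat (size v))) => Hij2.
  by apply: set_nth_default; apply/ltP; lia.
apply: Hag; lia.
Qed.

Lemma dir (S : Type) (X : cset S) (HX : subshift X) (u v : seq S) :
  context X u = context X v -> forall p, context (CB_deriv X) u p -> context (CB_deriv X) v p.
Proof.
move=> H [w w'] [x [Xx [i Hi]]].
have Hxk : forall k, Nat.lt k (size (w ++ u ++ w')) -> x (i + Z.of_nat k) = nth (x i) (w ++ u ++ w') k.
  by move=> k Hk; rewrite -[in RHS]Hi nth_subword.
pose j := i + Z.of_nat (size w).
have Hu : subword x j (size u) = u.
  apply: (@subword_eq _ _ _ _ _ (x i)) => // k Hk.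
  have -> : j + Z.of_nat k = i + Z.of_nat (size w + k)%nat by rewrite /j; lia.
  rewrite Hxk; last by rewrite !size_cat; lia.
  rewrite nth_cat; case: ltnP => H1; first by lia.
  rewrite nth_cat; case: ltnP => H2; last by lia.
  congr nth; lia.
exists (splice x j (size u) v); split; first exact: splice_deriv.
exists i; rewrite /=; apply: (@subword_eq _ _ _ _ _ (x i)) => // k Hk.
rewrite !size_cat in Hk.
rewrite /splice /j.
case: (Z.ltb_spec (i + Z.of_nat k) (i + Z.of_nat (size w))) => H1.
  rewrite Hxk; last by rewrite !size_cat; lia.
  rewrite !nth_cat; case: ltnP => H3 //; lia.
case: (Z.ltb_spec (i + Z.of_nat k) (i + Z.of_nat (size w) + Z.of_nat (size v))) => H2.
  rewrite nth_cat; case: ltnP => H3; first by lia.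
  rewrite nth_cat; case: ltnP => H4; last by lia.
  rewrite (set_nth_default (x i)); last by apply/ltP; lia.
  congr nth; lia.
have -> : i + Z.of_nat k - Z.of_nat (size v) + Z.of_nat (size u) = i + Z.of_nat (k - size v + size u)%nat by lia.
rewrite Hxk; last by rewrite !size_cat; lia.
rewrite !nth_cat; repeat (case: ltnP => ?); try lia; congr nth; lia.
Qed.

Close Scope Z_scope.
Theorem lemma3 (S : finType) (X : cset S) (HX : subshift X) (u v : seq S) :
  context X u = context X v -> context (CB_deriv X) u = context (CB_deriv X) v.
Proof.
move=> H. apply: functional_extensionality => p. apply: propositional_extensionality.
split; first exact: dir.
exact: (dir HX (esym H)).
Qed.
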